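(* Let $\mathbb P=\langle P,<\rangle$ be a strict partial order with $|P|=\kappa\ge\omega$ satisfying (u1) for all nonempty $L,G\in[P]^{<\kappa}$ with $L<G$ there is $x\in P$ with $L<x<G$; (u2) for every nonempty $K\in[P]^{<\kappa}$ there are $x,y,z\in P$ with $x<K$, $y>K$ and $z\parallel K$. Let $L,G,K\in[P]^{<\kappa}$ be nonempty with $L<G$. Then: (a) $|\{x\in P:L<x<G\}|=\kappa$; (b) $|\{x\in P:x<K\}|=|\{x\in P:x>K\}|=|\{x\in P:x\parallel K\}|=\kappa$; (c) if $\kappa$ is a regular cardinal, then $\mathbb P$ is not reversible. (d) Consequently, if $\kappa$ is a regular infinite cardinal and $\mathbb P$ is a $\kappa$-homogeneous-universal poset of size $\kappa$, then $\mathbb P$ is not reversible (in particular, the countable random poset is not reversible).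
   Context: $[P]^{<\kappa}$ is the set of subsets of $P$ of size $<\kappa$. For $p,q\in P$, $p\parallel q$ means $p\not\le q$ and $q\not\le p$. For $A,B\subseteq P$, $A<B$ means $a<b$ for all $a\in A,b\in B$; $x<K$ means $\{x\}<K$, etc., and $z\parallel K$ means $z\parallel k$ for all $k\in K$. A structure is reversible iff every bijective homomorphism from it onto itself (i.e. bijection $F:P\to P$ with $p<q\Rightarrow F(p)<F(q)$) is an automorphism. A poset $\mathbb P$ of size $\kappa$ is $\kappa$-homogeneous-universal iff every isomorphism between substructures of $\mathbb P$ of size $<\kappa$ extends to an automorphism of $\mathbb P$, and every poset of size $\le\kappa$ embeds into $\mathbb P$. *)

(* Defs.v *)
(* Cardinalities are expressed via injections (no cardinal library).
   kappa := |P|.  For S a subset of P (a predicate), |S| = kappa iff P injects into S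
   (Cantor-Schroeder-Bernstein), and |S| < kappa iff P does not inject into S. *)
From Stdlib Require Import Classical.

Definition injective {A B : Type} (f : A -> B) : Prop :=
  forall x y, f x = f y -> x = y.

Definition strict_po {P : Type} (lt : P -> P -> Prop) : Prop :=
  (forall x, ~ lt x x) /\ (forall x y z, lt x y -> lt y z -> lt x z).

Definition infinite_type (P : Type) : Prop :=
  exists f : nat -> P, injective f.

Definition full_size {P : Type} (S : P -> Prop) : Prop :=
  exists f : P -> P, injective f /\ forall p, S (f p).

Definition small {P : Type} (S : P -> Prop) : Prop := ~ full_size S.

Definition nonempty {P : Type} (S : P -> Prop) : Prop := exists x, S x.

Definition le_of {P : Type} (lt : P -> P -> Prop) (x y : P) : Prop := lt x y \/ x = y.

Definition incomp {P : Type} (lt : P -> P -> Prop) (p q : P) : Prop :=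
  ~ le_of lt p q /\ ~ le_of lt q p.

Definition setlt {P : Type} (lt : P -> P -> Prop) (A B : P -> Prop) : Prop :=
  forall a b, A a -> B b -> lt a b.

Definition below {P : Type} (lt : P -> P -> Prop) (x : P) (K : P -> Prop) : Prop :=
  forall k, K k -> lt x k.
Definition above {P : Type} (lt : P -> P -> Prop) (x : P) (K : P -> Prop) : Prop :=
  forall k, K k -> lt k x.
Definition incomp_set {P : Type} (lt : P -> P -> Prop) (x : P) (K : P -> Prop) : Prop :=
  forall k, K k -> incomp lt x k.

Definition u1 {P : Type} (lt : P -> P -> Prop) : Prop :=
  forall L G : P -> Prop, nonempty L -> nonempty G -> small L -> small G ->
    setlt lt L G -> exists x, above lt x L /\ below lt x G.

Definition u2 {P : Type} (lt : P -> P -> Prop) : Prop :=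
  forall K : P -> Prop, nonempty K -> small K ->
    exists x y z, below lt x K /\ above lt y K /\ incomp_set lt z K.

Definition regular_size (P : Type) : Prop :=
  forall (I : Type) (F : I -> P -> Prop),
    (~ exists g : P -> I, injective g) ->
    (forall i, small (F i)) ->
    small (fun p => exists i, F i p).

Definition bijective {A B : Type} (f : A -> B) : Prop :=
  injective f /\ forall y, exists x, f x = y.

Definition homomorphism {P : Type} (lt : P -> P -> Prop) (F : P -> P) : Prop :=
  forall p q, lt p q -> lt (F p) (F q).

Definition automorphism {P : Type} (lt : P -> P -> Prop) (F : P -> P) : Prop :=
  bijective F /\ forall p q, lt p q <-> lt (F p) (F q).

Definition reversible {P : Type} (lt : P -> P -> Prop) : Prop :=
  forall F : P -> P, bijective F -> homomorphism lt F -> automorphism lt F.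

Definition partial_iso {P : Type} (lt : P -> P -> Prop) (A B : P -> Prop) (f : P -> P) : Prop :=
  (forall a, A a -> B (f a)) /\
  (forall a a', A a -> A a' -> f a = f a' -> a = a') /\
  (forall b, B b -> exists a, A a /\ f a = b) /\
  (forall a a', A a -> A a' -> (lt a a' <-> lt (f a) (f a'))).

Definition embedding {Q P : Type} (ltQ : Q -> Q -> Prop) (lt : P -> P -> Prop) (e : Q -> P) : Prop :=
  injective e /\ forall q q', ltQ q q' <-> lt (e q) (e q').

Definition homogeneous_universal {P : Type} (lt : P -> P -> Prop) : Prop :=
  (forall (A B : P -> Prop) (f : P -> P), small A -> small B -> partial_iso lt A B f ->
     exists g, automorphism lt g /\ forall a, A a -> g a = f a) /\
  (forall (Q : Type) (ltQ : Q -> Q -> Prop), strict_po ltQ ->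
     (exists h : Q -> P, injective h) ->
     exists e : Q -> P, embedding ltQ lt e).

(* Main.v *)
Require Import Defs.
From Stdlib Require Import Classical ClassicalEpsilon FunctionalExtensionality.
From mathcomp Require ssreflect ssrfun ssrbool eqtype boolp wochoice.
Module WO.
Import ssreflect ssrfun ssrbool eqtype boolp wochoice.
Lemma wo_exists (T : Type) : exists R : T -> T -> Prop,
  (forall S : T -> Prop, (exists x, S x) -> exists m, S m /\ forall x, S x -> R m x) /\
  (forall x y, R x y -> R y x -> x = y).
Proof.
have [R HR] := well_ordering_principle {classic T}.
have Rrefl : forall x : {classic T}, R x x.
  move=> x.
  have ne : wochoice.nonempty (fun z : {classic T} => `[< z = x >] : bool).
    by exists x; rewrite unfold_in; apply/asboolP.
  have [z [[Az lb] _]] := HR _ ne.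
  move: Az; rewrite unfold_in => /asboolP Ez; subst z.
  by apply: lb; rewrite unfold_in; apply/asboolP.
exists (fun x y => R x y); split.
- move=> S [x Sx].
  have ne : wochoice.nonempty (fun z : {classic T} => `[< S z >] : bool).
    by exists x; rewrite unfold_in; apply/asboolP.
  have [z [[Az lb] _]] := HR _ ne.
  exists z; split; first by move: Az; rewrite unfold_in => /asboolP.
  by move=> y Sy; apply: lb; rewrite unfold_in; apply/asboolP.
- move=> x y Rxy Ryx.
  have ne : wochoice.nonempty (fun z : {classic T} => `[< z = x \/ z = y >] : bool).
    by exists x; rewrite unfold_in; apply/asboolP; left.
  have [z [_ U]] := HR _ ne.
  have Ax : minimum_of R (fun z : {classic T} => `[< z = x \/ z = y >] : bool) x.
    split; first by rewrite unfold_in; apply/asboolP; left.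
    by move=> w; rewrite unfold_in => /asboolP [->|->].
  have Ay : minimum_of R (fun z : {classic T} => `[< z = x \/ z = y >] : bool) y.
    split; first by rewrite unfold_in; apply/asboolP; right.
    by move=> w; rewrite unfold_in => /asboolP [->|->].
  by rewrite -(U _ Ax) (U _ Ay).
Qed.
End WO.

Lemma full_mono {P} (S S' : P -> Prop) : full_size S -> (forall x, S x -> S' x) -> full_size S'.
Proof. intros [f [Hf HS]] H. exists f. split; auto. Qed.

Lemma small_sub {P} (S S' : P -> Prop) : small S -> (forall x, S' x -> S x) -> small S'.
Proof. intros Hs H Hf. apply Hs. eapply full_mono; eauto. Qed.

Lemma small_image {P} (M : P -> Prop) (phi : P -> P) :
  small M -> small (fun y => exists m, M m /\ y = phi m).
Proof.
  intros Hs [h [Hh HA]]. apply Hs.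
  pose (k := fun p => proj1_sig (constructive_indefinite_description _ (HA p))).
  assert (Hk : forall p, M (k p) /\ h p = phi (k p)).
  { intro p. exact (proj2_sig (constructive_indefinite_description _ (HA p))). }
  exists k. split.
  - intros p1 p2 E. apply Hh. rewrite (proj2 (Hk p1)), (proj2 (Hk p2)), E. reflexivity.
  - intro p. apply Hk.
Qed.

Lemma exists_outside {P} (S R : P -> Prop) : full_size S -> small R -> exists y, S y /\ ~ R y.
Proof.
  intros HS HR. apply NNPP. intro N. apply HR. eapply full_mono; [exact HS|].
  intros x Sx. apply NNPP. intro nR. apply N. exists x; auto.
Qed.

Section Shift.
Variables (P : Type) (e : nat -> P) (He : injective e).

Definition sh (p : P) : P :=
  match excluded_middle_informative (exists n, p = e n) with
  | left H => e (S (proj1_sig (constructive_indefinite_description _ H)))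
  | right _ => p
  end.

Lemma sh_ne0 p : sh p <> e 0.
Proof.
  unfold sh. destruct (excluded_middle_informative (exists n, p = e n)) as [H|H].
  - destruct (constructive_indefinite_description _ H) as [n En]; simpl.
    intro E. apply He in E. discriminate.
  - intro E. apply H. exists 0. exact E.
Qed.

Lemma sh_inj : injective sh.
Proof.
  intros p q. unfold sh.
  destruct (excluded_middle_informative (exists n, p = e n)) as [H|H];
  destruct (excluded_middle_informative (exists n, q = e n)) as [H'|H'].
  - destruct (constructive_indefinite_description _ H) as [n En];
    destruct (constructive_indefinite_description _ H') as [m Em]; simpl.
    intro E. apply He in E. injection E. intros; subst; auto.
  - destruct (constructive_indefinite_description _ H) as [n En]; simpl.
    intro E. exfalso. apply H'. exists (S n). auto.
  - destruct (constructive_indefinite_description _ H') as [n En]; simpl.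
    intro E. exfalso. apply H. exists (S n). auto.
  - auto.
Qed.

Lemma small_add1 (S : P -> Prop) (q : P) : small S -> small (fun x => S x \/ x = q).
Proof.
  intros Hs [f [Hf HS]]. apply Hs.
  exists (fun x => match excluded_middle_informative (f (sh x) = q) with
                   | left _ => f (e 0) | right _ => f (sh x) end).
  split.
  - intros x y.
    destruct (excluded_middle_informative (f (sh x) = q)) as [A|A];
    destruct (excluded_middle_informative (f (sh y) = q)) as [B|B]; intro E.
    + apply sh_inj. apply Hf. congruence.
    + exfalso. apply Hf in E. apply (sh_ne0 y). auto.
    + exfalso. apply Hf in E. apply (sh_ne0 x). auto.
    + apply sh_inj. apply Hf. auto.
  - intro x. destruct (excluded_middle_informative (f (sh x) = q)) as [A|A].
    + destruct (HS (e 0)) as [H|H]; auto. exfalso.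
      apply (sh_ne0 x). apply Hf. congruence.
    + destruct (HS (sh x)) as [H|H]; auto. contradiction.
Qed.

Lemma small_empty : small (fun _ : P => False).
Proof. intros [f [_ H]]. exact (H (e 0)). Qed.

Lemma small_single (q : P) : small (fun x => x = q).
Proof.
  apply (small_sub (fun x => False \/ x = q)). apply (small_add1 _ q small_empty). intros x H. auto.
Qed.

Lemma small_two (q r : P) : small (fun x => x = q \/ x = r).
Proof.
  apply (small_sub (fun x => x = q \/ x = r)). apply (small_add1 _ r (small_single q)). intros x H. auto.
Qed.

Lemma small_union (Hreg : regular_size P) (A B : P -> Prop) :
  small A -> small B -> small (fun x => A x \/ B x).
Proof.
  intros HA HB.
  assert (H := Hreg bool (fun b => if b then A else B)).
  apply (small_sub (fun p => exists i : bool, (if i then A else B) p)). apply H.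
  - intros [g Hg].
    assert (E : forall n m, g (e n) = g (e m) -> n = m).
    { intros n m E'. apply Hg in E'. apply He in E'. auto. }
    destruct (g (e 0)) eqn:E0; destruct (g (e 1)) eqn:E1; destruct (g (e 2)) eqn:E2;
    first [ assert (X := E 0 1 ltac:(congruence)); discriminate
          | assert (X := E 0 2 ltac:(congruence)); discriminate
          | assert (X := E 1 2 ltac:(congruence)); discriminate ].
  - intros [|]; auto.
  - intros x [Ax|Bx]; [exists true | exists false]; auto.
Qed.
End Shift.

Section Poset.
Variables (P : Type) (lt : P -> P -> Prop) (Hpo : strict_po lt) (H1 : u1 lt) (H2 : u2 lt).

Lemma irr x : ~ lt x x. Proof. apply (proj1 Hpo). Qed.
Lemma trans x y z : lt x y -> lt y z -> lt x z. Proof. apply (proj2 Hpo). Qed.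

Lemma full_between (L G : P -> Prop) : small L -> small G -> setlt lt L G ->
  full_size (fun y => above lt y L /\ below lt y G).
Proof.
  intros HL HG HLG. apply NNPP. intro Hs.
  destruct (classic (nonempty L)) as [NL|NL]; destruct (classic (nonempty G)) as [NG|NG].
  - destruct (H1 L G NL NG HL HG HLG) as [x0 Hx0].
    destruct (H1 (fun y => above lt y L /\ below lt y G) G) as [x [Ax Bx]]; auto.
    + exists x0; auto.
    + intros a b [_ Ba] Gb. auto.
    + apply (irr x). apply Ax. split; auto.
      intros l Ll. apply trans with x0. apply Hx0; auto. apply Ax; auto.
  - destruct (H2 L NL HL) as [_ [y [_ [_ [Ay _]]]]].
    destruct (H2 (fun y => above lt y L /\ below lt y G)) as [_ [y' [_ [_ [Ay' _]]]]]; auto.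
    + exists y. split; auto. intros g Gg. exfalso. apply NG. exists g; auto.
    + apply (irr y'). apply Ay'. split.
      * intros l Ll. apply trans with y. apply Ay; auto. apply Ay'. split; auto.
        intros g Gg. exfalso. apply NG. exists g; auto.
      * intros g Gg. exfalso. apply NG. exists g; auto.
  - destruct (H2 G NG HG) as [x [_ [_ [Bx _]]]].
    destruct (H2 (fun y => above lt y L /\ below lt y G)) as [x' [_ [_ [Bx' _]]]]; auto.
    + exists x. split; auto. intros l Ll. exfalso. apply NL. exists l; auto.
    + apply (irr x'). apply Bx'. split.
      * intros l Ll. exfalso. apply NL. exists l; auto.
      * intros g Gg. apply trans with x. apply Bx'. split; auto.
        intros l Ll. exfalso. apply NL. exists l; auto. apply Bx; auto.
  - apply Hs. exists (fun p => p). split. intros x y E; auto.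
    intro p. split.
    + intros l Ll. exfalso. apply NL. exists l; auto.
    + intros g Gg. exfalso. apply NG. exists g; auto.
Qed.

Lemma incomp_full (e : nat -> P) (He : injective e) (K : P -> Prop) :
  small K -> nonempty K -> full_size (fun x => incomp_set lt x K).
Proof.
  intros HK NK. apply NNPP. intro Hs.
  destruct (H2 K NK HK) as [x0 [y0 [_ [Bx0 [Ay0 _]]]]].
  assert (HT : small (fun t => (incomp_set lt t K \/ t = x0) \/ t = y0)).
  { apply small_add1 with e; auto. apply small_add1 with e; auto. }
  assert (NT : nonempty (fun t => (incomp_set lt t K \/ t = x0) \/ t = y0)) by (exists x0; left; right; reflexivity).
  destruct (H2 _ NT HT) as [_ [_ [z [_ [_ Iz]]]]].
  assert (Z : incomp_set lt z K).
  { intros k Kk.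
    destruct (Iz x0 (or_introl (or_intror eq_refl))) as [_ N0]. destruct (Iz y0 (or_intror eq_refl)) as [N1 _].
    split.
    - intros [l|l].
      + apply N1. left. apply trans with k; auto.
      + subst. apply N0. left. auto.
    - intros [l|l].
      + apply N0. left. apply trans with k; auto.
      + subst. apply N0. left. auto. }
  destruct (Iz z (or_introl (or_introl Z))) as [N _]. apply N. right. reflexivity.
Qed.
End Poset.

Section Constr.
Variables (P : Type) (lt : P -> P -> Prop) (Hpo : strict_po lt) (H1 : u1 lt) (H2 : u2 lt).
Variables (e : nat -> P) (He : injective e) (Hreg : regular_size P).
Variables (a0 b0 c0 d0 : P) (Hab : incomp lt a0 b0) (Hcd : lt c0 d0).
Variables (X : P -> Prop) (W : P -> P -> Prop) (Hwf : well_founded W)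
  (Htot : forall v w, X v -> X w -> v <> w -> W v w \/ W w v)
  (Hseg : forall w, X w -> small (fun v => X v /\ W v w))
  (s : P -> P) (Hs : forall p, exists w, X w /\ s w = p).

Definition Rel := P -> P -> Prop.
Definition B0 : Rel := fun a b => (a = a0 /\ b = c0) \/ (a = b0 /\ b = d0).
Definition dom (U : Rel) a := exists b, U a b.
Definition ran (U : Rel) b := exists a, U a b.
Definition incl (U V : Rel) := forall a b, U a b -> V a b.
Definition good (U : Rel) :=
  (forall a b b', U a b -> U a b' -> b = b') /\
  (forall a a' b, U a b -> U a' b -> a = a') /\
  (forall a b a' b', U a b -> U a' b' -> lt a a' -> lt b b') /\
  incl B0 U /\ small (dom U) /\ small (ran U).
Definition Spec (U : Rel) (p : P) (V : Rel) := good V /\ incl U V /\ dom V p /\ ran V p.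

Lemma good_B0 : good B0.
Proof.
  destruct Hab as [N1 N2].
  assert (Nab : a0 <> b0) by (intro E; apply N1; right; auto).
  assert (Ncd : c0 <> d0) by (intro E; subst; apply (irr _ _ Hpo d0); auto).
  unfold good, B0. split; [|split; [|split; [|split; [|split]]]].
  - intros a b b' [[-> ->]|[-> ->]] [[E ->]|[E ->]]; auto; congruence.
  - intros a a' b [[-> ->]|[-> ->]] [[-> E]|[-> E]]; auto; congruence.
  - intros a b a' b' [[-> ->]|[-> ->]] [[-> ->]|[-> ->]] L.
    + exfalso; apply (irr _ _ Hpo a0); auto.
    + exfalso; apply N1; left; auto.
    + exfalso; apply N2; left; auto.
    + exfalso; apply (irr _ _ Hpo b0); auto.
  - intros a b H; exact H.
  - apply (small_sub (fun x => x = a0 \/ x = b0)). apply small_two with e; auto.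
    intros x [b [[-> _]|[-> _]]]; auto.
  - apply (small_sub (fun x => x = c0 \/ x = d0)). apply small_two with e; auto.
    intros x [b [[_ ->]|[_ ->]]]; auto.
Qed.

Lemma good_add (U : Rel) a b : good U -> ~ dom U a -> ~ ran U b ->
  (forall a' b', U a' b' -> lt a' a -> lt b' b) ->
  (forall a' b', U a' b' -> lt a a' -> lt b b') ->
  good (fun x y => U x y \/ (x = a /\ y = b)).
Proof.
  intros [F [I [Hh [Hb [Sd Sr]]]]] Na Nb HL HG.
  split; [|split; [|split; [|split; [|split]]]].
  - intros x y y' H H'; destruct H as [A|[E1 E2]]; destruct H' as [A'|[E1' E2']]; subst; eauto;
      exfalso; apply Na; eexists; eauto.
  - intros x x' y H H'; destruct H as [A|[E1 E2]]; destruct H' as [A'|[E1' E2']]; subst; eauto;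
      exfalso; apply Nb; eexists; eauto.
  - intros x y x' y' H H' L; destruct H as [A|[E1 E2]]; destruct H' as [A'|[E1' E2']]; subst; eauto.
    exfalso; apply (irr _ _ Hpo a); auto.
  - intros x y H; left; auto.
  - apply (small_sub (fun x => dom U x \/ x = a)). apply small_add1 with e; auto.
    intros x [y [A|[-> _]]]; [left; exists y|right]; auto.
  - apply (small_sub (fun x => ran U x \/ x = b)). apply small_add1 with e; auto.
    intros x [y [A|[_ ->]]]; [left; exists y|right]; auto.
Qed.

Lemma forth (U : Rel) p : good U -> exists V, good V /\ incl U V /\ dom V p.
Proof.
  intros HU. destruct (classic (dom U p)) as [D|D].
  { exists U. split; auto. split; auto. intros a b H; auto. }
  pose (L := fun y => exists d, U d y /\ lt d p).
  pose (G := fun y => exists d, U d y /\ lt p d).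
  destruct HU as [F [I [Hh [Hb [Sd Sr]]]]].
  assert (SL : small L) by (apply (small_sub (ran U)); auto; intros y [d [A _]]; exists d; auto).
  assert (SG : small G) by (apply (small_sub (ran U)); auto; intros y [d [A _]]; exists d; auto).
  assert (LG : setlt lt L G).
  { intros y y' [d [A Ld]] [d' [A' Ld']]. eapply Hh; eauto. eapply trans; eauto. }
  destruct (exists_outside _ _ (full_between P lt Hpo H1 H2 L G SL SG LG) Sr) as [y [[Ay By] Ny]].
  exists (fun x z => U x z \/ (x = p /\ z = y)). split; [|split].
  - apply good_add; auto.
    + repeat split; auto.
    + intros a' b' A La. apply Ay. exists a'; auto.
    + intros a' b' A La. apply By. exists a'; auto.
  - intros x z H; left; auto.
  - exists y. right; auto.
Qed.

Lemma back (U : Rel) q : good U -> exists V, good V /\ incl U V /\ ran V q.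
Proof.
  intros HU. destruct (classic (ran U q)) as [D|D].
  { exists U. split; auto. split; auto. intros a b H; auto. }
  assert (HU' := HU).
  destruct HU as [F [I [Hh [Hb [Sd Sr]]]]].
  assert (ND : nonempty (dom U)) by (exists a0; exists c0; apply Hb; left; auto).
  destruct (H2 _ ND Sd) as [_ [_ [z [_ [_ Iz]]]]].
  exists (fun x y => U x y \/ (x = z /\ y = q)). split; [|split].
  - apply good_add; auto.
    + intros [y A]. destruct (Iz z (ex_intro _ y A)) as [N _]. apply N. right; auto.
    + intros a' b' A La. exfalso. destruct (Iz a' (ex_intro _ b' A)) as [_ N]. apply N. left; auto.
    + intros a' b' A La. exfalso. destruct (Iz a' (ex_intro _ b' A)) as [N _]. apply N. left; auto.
  - intros x y H; left; auto.
  - exists z. right; auto.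
Qed.

Lemma ext_exists U p : good U -> exists V, Spec U p V.
Proof.
  intros HU. destruct (forth U p HU) as [V1 [G1 [I1 D1]]].
  destruct (back V1 p G1) as [V2 [G2 [I2 R2]]].
  exists V2. split; auto. split. intros a b H; auto.
  split; auto. destruct D1 as [b Db]. exists b; auto.
Qed.

Definition Ext (U : Rel) (p : P) : Rel :=
  match excluded_middle_informative (exists V, Spec U p V) with
  | left H => proj1_sig (constructive_indefinite_description _ H)
  | right _ => U
  end.

Lemma Ext_spec U p : good U -> Spec U p (Ext U p).
Proof.
  intros HU. unfold Ext.
  destruct (excluded_middle_informative (exists V, Spec U p V)) as [H|H].
  - exact (proj2_sig (constructive_indefinite_description _ H)).
  - exfalso. apply H. apply ext_exists; auto.
Qed.

Definition step (w : P) (rec : forall v, W v w -> Rel) : Rel :=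
  Ext (fun a b => B0 a b \/ exists v (h : W v w), X v /\ rec v h a b) (s w).

Definition Gr : P -> Rel := Fix Hwf (fun _ => Rel) step.

Definition Uw (w : P) : Rel := fun a b => B0 a b \/ exists v (h : W v w), X v /\ Gr v a b.

Lemma Gr_eq w : Gr w = Ext (Uw w) (s w).
Proof.
  unfold Gr. rewrite Fix_eq. reflexivity.
  intros x f g Hfg. unfold step.
  assert (E : f = g).
  { apply functional_extensionality_dep. intro y. apply functional_extensionality_dep. intro h. apply Hfg. }
  rewrite E. reflexivity.
Qed.

Lemma family_small w (S : P -> P -> Prop) : X w ->
  (forall v, W v w -> X v -> small (S v)) ->
  small (fun a => exists v, W v w /\ X v /\ S v a).
Proof.
  intros Xw HS.
  pose (I := {v : P | W v w /\ X v}).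
  assert (H := Hreg I (fun i => S (proj1_sig i))).
  apply (small_sub (fun p => exists i : I, S (proj1_sig i) p)).
  - apply H.
    + intros [g Hg]. apply (Hseg w Xw). exists (fun p => proj1_sig (g p)). split.
      * intros p q E. apply Hg. apply eq_sig_hprop; [intros x u v; apply proof_irrelevance | exact E].
      * intro p. destruct (g p) as [v [Wv Xv]]. simpl. auto.
    + intros [v [Wv Xv]]. simpl. apply HS; auto.
  - intros a [v [Wv [Xv Sa]]]. exists (exist _ v (conj Wv Xv)). simpl. auto.
Qed.

Lemma inv w : X w -> good (Uw w) /\ Spec (Uw w) (s w) (Gr w).
Proof.
  induction w as [w IH] using (well_founded_ind Hwf). intros Xw.
  assert (GU : good (Uw w)).
  { assert (GV : forall v, W v w -> X v -> good (Gr v)).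
    { intros v Wv Xv. apply (IH v Wv Xv). }
    assert (Comp : forall v1 v2, W v1 w -> X v1 -> W v2 w -> X v2 -> W v1 v2 -> incl (Gr v1) (Gr v2)).
    { intros v1 v2 W1 X1 W2 X2 W12 a b H.
      destruct (IH v2 W2 X2) as [_ [_ [Inc _]]]. apply Inc. right. exists v1, W12. auto. }
    assert (Two : forall a b a' b', Uw w a b -> Uw w a' b' ->
              exists V, good V /\ V a b /\ V a' b').
    { intros a b a' b' [H|[v [Wv [Xv H]]]] [H'|[v' [Wv' [Xv' H']]]].
      - exists B0. split; auto. apply good_B0.
      - exists (Gr v'). split; auto. split; auto. apply (GV v' Wv' Xv'). auto.
      - exists (Gr v). split; auto. split; auto. apply (GV v Wv Xv). auto.
      - destruct (classic (v = v')) as [E|E].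
        + subst. exists (Gr v'). auto.
        + destruct (Htot v v' Xv Xv' E) as [L|L].
          * exists (Gr v'). split; auto. split; auto. apply (Comp v v'); auto.
          * exists (Gr v). split; auto. split; auto. apply (Comp v' v); auto. }
    split; [|split; [|split; [|split; [|split]]]].
    - intros a b b' H H'. destruct (Two _ _ _ _ H H') as [V [[F _] [A A']]]. eauto.
    - intros a a' b H H'. destruct (Two _ _ _ _ H H') as [V [[_ [I _]] [A A']]]. eauto.
    - intros a b a' b' H H' L. destruct (Two _ _ _ _ H H') as [V [[_ [_ [Hh _]]] [A A']]]. eauto.
    - intros a b H. left; auto.
    - apply (small_sub (fun a => dom B0 a \/ exists v, W v w /\ X v /\ dom (Gr v) a)).
      + apply small_union with e; auto. apply good_B0.
        apply family_small; auto. intros v Wv Xv. apply (GV v Wv Xv).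
      + intros a [b [H|[v [Wv [Xv H]]]]]; [left; exists b; auto | right; exists v; split; auto; split; auto; exists b; auto].
    - apply (small_sub (fun a => ran B0 a \/ exists v, W v w /\ X v /\ ran (Gr v) a)).
      + apply small_union with e; auto. apply good_B0.
        apply family_small; auto. intros v Wv Xv. apply (GV v Wv Xv).
      + intros b [a [H|[v [Wv [Xv H]]]]]; [left; exists a; auto | right; exists v; split; auto; split; auto; exists a; auto]. }
  split; auto. rewrite Gr_eq. apply Ext_spec; auto.
Qed.

Lemma Gr_mono v w : X v -> X w -> W v w -> incl (Gr v) (Gr w).
Proof.
  intros Xv Xw Wvw a b H. destruct (inv w Xw) as [_ [_ [Inc _]]]. apply Inc. right. exists v, Wvw. auto.
Qed.

Definition FU : Rel := fun a b => exists v, X v /\ Gr v a b.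

Lemma FU_two a b a' b' : FU a b -> FU a' b' -> exists V, good V /\ V a b /\ V a' b'.
Proof.
  intros [v [Xv H]] [v' [Xv' H']].
  assert (Gv : forall u, X u -> good (Gr u)) by (intros u Xu; apply (inv u Xu)).
  destruct (classic (v = v')) as [E|E].
  - subst. exists (Gr v'). auto.
  - destruct (Htot v v' Xv Xv' E) as [L|L].
    + exists (Gr v'). split; auto. split; auto. apply (Gr_mono v v'); auto.
    + exists (Gr v). split; auto. split; auto. apply (Gr_mono v' v); auto.
Qed.

Lemma FU_total p : exists b, FU p b.
Proof.
  destruct (Hs p) as [w [Xw E]]. destruct (inv w Xw) as [_ [_ [_ [[b Hb] _]]]].
  exists b, w. subst. auto.
Qed.

Lemma FU_surj q : exists a, FU a q.
Proof.
  destruct (Hs q) as [w [Xw E]]. destruct (inv w Xw) as [_ [_ [_ [_ [a Ha]]]]].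
  exists a, w. subst. auto.
Qed.

Lemma FU_B0 a b : B0 a b -> FU a b.
Proof.
  intros H. destruct (Hs a0) as [w [Xw _]]. exists w. split; auto.
  destruct (inv w Xw) as [_ [[_ [_ [_ [Hb _]]]] _]]. auto.
Qed.

Lemma not_reversible_constr : ~ reversible lt.
Proof.
  intros Rev.
  pose (F := fun p => proj1_sig (constructive_indefinite_description _ (FU_total p))).
  assert (HF : forall p, FU p (F p)).
  { intro p. exact (proj2_sig (constructive_indefinite_description _ (FU_total p))). }
  assert (Fun : forall a b, FU a b -> F a = b).
  { intros a b H. destruct (FU_two _ _ _ _ (HF a) H) as [V [[Fn _] [A B]]]. eauto. }
  assert (Bij : bijective F).
  { split.
    - intros p q E. destruct (FU_two _ _ _ _ (HF p) (HF q)) as [V [[_ [I _]] [A B]]].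
      rewrite E in A. eauto.
    - intro y. destruct (FU_surj y) as [a Ha]. exists a. auto. }
  assert (Hom : homomorphism lt F).
  { intros p q L. destruct (FU_two _ _ _ _ (HF p) (HF q)) as [V [[_ [_ [Hh _]]] [A B]]]. eauto. }
  destruct (Rev F Bij Hom) as [_ Iff].
  assert (Ea : F a0 = c0) by (apply Fun; apply FU_B0; left; auto).
  assert (Eb : F b0 = d0) by (apply Fun; apply FU_B0; right; auto).
  destruct Hab as [N _]. apply N. left. apply Iff. rewrite Ea, Eb. auto.
Qed.
End Constr.

Lemma wo_setup (P : Type) :
  exists (X : P -> Prop) (W : P -> P -> Prop) (s : P -> P),
    well_founded W /\
    (forall v w, X v -> X w -> v <> w -> W v w \/ W w v) /\
    (forall w, X w -> small (fun v => X v /\ W v w)) /\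
    (forall p, exists w, X w /\ s w = p).
Proof.
  destruct (WO.wo_exists P) as [R [Hmin Hanti]].
  pose (W0 := fun x y => R x y /\ x <> y).
  assert (Rtot : forall x y, R x y \/ R y x).
  { intros x y. destruct (Hmin (fun z => z = x \/ z = y) (ex_intro _ x (or_introl eq_refl))) as [m [[E|E] Hm]]; subst m.
    - left. apply Hm. auto.
    - right. apply Hm. auto. }
  assert (Hwf : well_founded W0).
  { intro x. apply NNPP. intro N.
    destruct (Hmin (fun z => ~ Acc W0 z) (ex_intro _ x N)) as [m [Nm Hm]].
    apply Nm. constructor. intros y [Rym Nym]. apply NNPP. intro Ny.
    apply Nym. apply Hanti; auto. }
  assert (Tot : forall v w, v <> w -> W0 v w \/ W0 w v).
  { intros v w N. destruct (Rtot v w); [left|right]; split; auto. }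
  destruct (classic (exists p, full_size (fun v => W0 v p))) as [Ex|NEx].
  - destruct (Hmin _ Ex) as [p0 [[h [Hh HX]] Hp0]].
    exists (fun v => W0 v p0), W0.
    exists (fun x => match excluded_middle_informative (exists p, h p = x) with
                     | left H => proj1_sig (constructive_indefinite_description _ H)
                     | right _ => x end).
    split; [auto|split; [|split]].
    + intros v w _ _ N. auto.
    + intros w [Rw Nw] Full. apply Nw. apply Hanti; auto.
      apply Hp0. eapply full_mono; [exact Full|]. intros v [_ H]; auto.
    + intro p. exists (h p). split; auto.
      destruct (excluded_middle_informative (exists q, h q = h p)) as [H|H].
      * apply Hh. exact (proj2_sig (constructive_indefinite_description _ H)).
      * exfalso; apply H; exists p; auto.
  - exists (fun _ => True), W0, (fun p => p).
    split; [auto|split; [|split]].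
    + intros v w _ _ N. auto.
    + intros w _ Full. apply NEx. exists w. eapply full_mono; [exact Full|]. intros v [_ H]; auto.
    + intro p. exists p. auto.
Qed.

Lemma part_c (P : Type) (lt : P -> P -> Prop) :
  strict_po lt -> infinite_type P -> u1 lt -> u2 lt -> regular_size P -> ~ reversible lt.
Proof.
  intros Hpo [e He] H1 H2 Hreg.
  assert (Ne : forall q : P, nonempty (fun x => x = q)) by (intro q; exists q; auto).
  destruct (H2 _ (Ne (e 0)) (small_single P e He (e 0))) as [_ [_ [b0 [_ [_ Ib]]]]].
  destruct (H2 _ (Ne (e 0)) (small_single P e He (e 0))) as [_ [d0 [_ [_ [Ad _]]]]].
  destruct (wo_setup P) as [X [W [s [Hwf [Htot [Hseg Hs]]]]]].
  assert (Hab : incomp lt (e 0) b0).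
  { destruct (Ib (e 0) eq_refl) as [A B]. split; auto. }
  eapply (not_reversible_constr P lt Hpo H1 H2 e He Hreg (e 0) b0 (e 0) d0 Hab (Ad (e 0) eq_refl) X W Hwf Htot Hseg s Hs).
Qed.

Definition ltQ {P} (lt : P -> P -> Prop) (L G : P -> Prop) (x y : option P) : Prop :=
  match x, y with
  | Some p, Some q => lt p q
  | Some p, None => exists l, L l /\ le_of lt p l
  | None, Some q => exists g, G g /\ le_of lt g q
  | None, None => False
  end.

Section HU.
Variables (P : Type) (lt : P -> P -> Prop) (Hpo : strict_po lt).

Lemma le_lt a b c : le_of lt a b -> lt b c -> lt a c.
Proof. intros [H|H] H'; [eapply (trans _ _ Hpo); eauto | subst; auto]. Qed.
Lemma lt_le a b c : lt a b -> le_of lt b c -> lt a c.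
Proof. intros H [H'|H']; [eapply (trans _ _ Hpo); eauto | subst; auto]. Qed.
Lemma le_le a b c : le_of lt a b -> le_of lt b c -> le_of lt a c.
Proof. intros [H|H] H'; [left; eapply lt_le; eauto | subst; auto]. Qed.

Lemma ltQ_po L G : setlt lt L G -> strict_po (ltQ lt L G).
Proof.
  intros LG. split.
  - intros [p|]; simpl; auto. apply (irr _ _ Hpo).
  - intros [p|] [q|] [r|]; simpl; try tauto.
    + apply (trans _ _ Hpo).
    + intros H [l [Ll Hl]]. exists l. split; auto. left. eapply lt_le; eauto.
    + intros [l [Ll Hl]] [g [Gg Hg]]. eapply le_lt; eauto. eapply lt_le; eauto.
    + intros [g [Gg Hg]] H. exists g. split; auto. left. eapply le_lt; eauto.
    + intros [g [Gg Hg]] [l [Ll Hl]]. apply (irr _ _ Hpo l).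
      eapply lt_le. apply (LG l g Ll Gg). eapply le_le; eauto.
Qed.

Lemma hu_point (Hinf : infinite_type P) (Hreg : regular_size P) (Hhu : homogeneous_universal lt)
  (L G K : P -> Prop) : small L -> small G -> small K -> setlt lt L G ->
  exists x, forall m, (L m \/ G m \/ K m) ->
    (lt m x <-> ltQ lt L G (Some m) None) /\ (lt x m <-> ltQ lt L G None (Some m)) /\ x <> m.
Proof.
  intros SL SG SK LG. destruct Hinf as [e He]. destruct Hhu as [Hom Univ].
  pose (hQ := fun o : option P => match o with None => e 0 | Some p => sh P e p end).
  assert (HhQ : injective hQ).
  { intros [p|] [q|]; simpl; intro E.
    - f_equal. apply (sh_inj P e He); auto.
    - exfalso; apply (sh_ne0 P e He p); auto.
    - exfalso; apply (sh_ne0 P e He q); auto.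
    - auto. }
  destruct (Univ (option P) (ltQ lt L G) (ltQ_po L G LG) (ex_intro _ hQ HhQ)) as [em [Hem Hemb]].
  pose (M := fun m => L m \/ G m \/ K m).
  assert (SM : small M).
  { apply small_union with e; auto. apply small_union with e; auto. }
  pose (A := fun y => exists m, M m /\ y = em (Some m)).
  assert (SA : small A) by (apply small_image; auto).
  pose (f := fun y => match excluded_middle_informative (exists m, y = em (Some m)) with
                      | left H => proj1_sig (constructive_indefinite_description _ H)
                      | right _ => y end).
  assert (Hf : forall m, f (em (Some m)) = m).
  { intro m. unfold f. destruct (excluded_middle_informative (exists m', em (Some m) = em (Some m'))) as [H|H].
    - assert (E := proj2_sig (constructive_indefinite_description _ H)). simpl in E.
      apply Hem in E. injection E. auto.
    - exfalso; apply H; exists m; auto. }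
  assert (Hpi : partial_iso lt A M f).
  { split; [|split; [|split]].
    - intros a [m [Mm ->]]. rewrite Hf. auto.
    - intros a a' [m [Mm ->]] [m' [Mm' ->]]. rewrite !Hf. intro; subst; auto.
    - intros b Mb. exists (em (Some b)). split. exists b; auto. apply Hf.
    - intros a a' [m [Mm ->]] [m' [Mm' ->]]. rewrite !Hf. split; intro H.
      + apply (proj2 (Hemb (Some m) (Some m'))) in H. exact H.
      + apply (proj1 (Hemb (Some m) (Some m'))). exact H. }
  destruct (Hom A M f SA SM Hpi) as [g [[[Ginj _] Giff] Gext]].
  assert (Hg : forall m, M m -> g (em (Some m)) = m).
  { intros m Mm. rewrite Gext. apply Hf. exists m; auto. }
  exists (g (em None)). intros m Mm. split; [|split].
  - split; intro H.
    + rewrite <- (Hg m Mm) in H. apply (proj2 (Giff _ _)) in H. apply (proj2 (Hemb _ _)) in H. exact H.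
    + apply (proj1 (Hemb _ _)) in H. apply (proj1 (Giff _ _)) in H. rewrite (Hg m Mm) in H. exact H.
  - split; intro H.
    + rewrite <- (Hg m Mm) in H. apply (proj2 (Giff _ _)) in H. apply (proj2 (Hemb _ _)) in H. exact H.
    + apply (proj1 (Hemb _ _)) in H. apply (proj1 (Giff _ _)) in H. rewrite (Hg m Mm) in H. exact H.
  - intro E. rewrite <- (Hg m Mm) in E. apply Ginj in E. apply Hem in E. discriminate.
Qed.

Lemma hu_u1 (Hinf : infinite_type P) (Hreg : regular_size P) (Hhu : homogeneous_universal lt) : u1 lt.
Proof.
  intros L G NL NG SL SG LG. assert (Hinf' := Hinf). destruct Hinf' as [e He].
  destruct (hu_point Hinf Hreg Hhu L G (fun _ => False) SL SG (small_empty P e) LG) as [x Hx].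
  exists x. split.
  - intros l Ll. apply (Hx l (or_introl Ll)). simpl. exists l. split; auto. right; auto.
  - intros g Gg. apply (Hx g (or_intror (or_introl Gg))). simpl. exists g. split; auto. right; auto.
Qed.

Lemma hu_u2 (Hinf : infinite_type P) (Hreg : regular_size P) (Hhu : homogeneous_universal lt) : u2 lt.
Proof.
  intros K NK SK. assert (Hinf' := Hinf). destruct Hinf' as [e He].
  assert (E0 := small_empty P e).
  destruct (hu_point Hinf Hreg Hhu (fun _ => False) K (fun _ => False) E0 SK E0
              ltac:(intros a b [])) as [x Hx].
  destruct (hu_point Hinf Hreg Hhu K (fun _ => False) (fun _ => False) SK E0 E0
              ltac:(intros a b _ [])) as [y Hy].
  destruct (hu_point Hinf Hreg Hhu (fun _ => False) (fun _ => False) K E0 E0 SK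
              ltac:(intros a b [])) as [z Hz].
  exists x, y, z. split; [|split].
  - intros k Kk. apply (Hx k (or_intror (or_introl Kk))). simpl. exists k. split; auto. right; auto.
  - intros k Kk. apply (Hy k (or_introl Kk)). simpl. exists k. split; auto. right; auto.
  - intros k Kk. destruct (Hz k (or_intror (or_intror Kk))) as [[A _] [[B _] N]]. split.
    + intros [H|H]. destruct (B H) as [g [[] _]]. auto.
    + intros [H|H]. destruct (A H) as [l [[] _]]. auto.
Qed.
End HU.

Theorem theorem3p5 (P : Type) (lt : P -> P -> Prop) :
  strict_po lt -> infinite_type P ->
  ( (u1 lt /\ u2 lt) ->
    (forall L G K : P -> Prop,
       small L -> small G -> small K ->
       nonempty L -> nonempty G -> nonempty K -> setlt lt L G ->
       full_size (fun x => above lt x L /\ below lt x G) /\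
       full_size (fun x => below lt x K) /\
       full_size (fun x => above lt x K) /\
       full_size (fun x => incomp_set lt x K)) /\
    (regular_size P -> ~ reversible lt) ) /\
  (regular_size P -> homogeneous_universal lt -> ~ reversible lt).
Proof.
  intros Hpo Hinf. split.
  - intros [H1 H2]. split.
    + intros L G K SL SG SK NL NG NK LG. destruct Hinf as [e He].
      assert (E0 := small_empty P e).
      split; [|split; [|split]].
      * apply full_between; auto.
      * apply (full_mono (fun y => above lt y (fun _ => False) /\ below lt y K)).
        apply full_between; auto. intros a b []. intros y [_ B]; auto.
      * apply (full_mono (fun y => above lt y K /\ below lt y (fun _ => False))).
        apply full_between; auto. intros a b _ []. intros y [A _]; auto.
      * apply incomp_full with e; auto.
    + intros Hreg. apply part_c; auto.
  - intros Hreg Hhu. apply part_c; auto.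
    + apply hu_u1; auto.
    + apply hu_u2; auto.
Qed.
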